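(* Let $P(x)=\sum_{i=0}^n p_i x^i\in\mathbb{R}[x]$ be a polynomial of degree $n\ge 2$ that is not identically zero. For a point $m\in\mathbb{R}$, a real $\epsilon>0$ and a positive integer $N$, write $m[\epsilon;N]:=\{m+i\epsilon : i=-\lceil N/2\rceil,\dots,\lceil N/2\rceil\}$. Let $\mathbf{m}:=m[\epsilon;n]$ and $\mathbf{M}:=m[\epsilon/2^{\lambda};2^{\lambda}n]$, where $\lambda\ge 2$ is an integer with $\lambda=O(\log n)$. Consider the following randomized procedure: for $\rho=63,127,255,\dots$ (i.e. $\rho_{j+1}=2\rho_j+1$), pick a point $m_j\in\mathbf{M}$ uniformly at random (independently in each iteration), compute (by interval arithmetic) an approximation $\tilde v_j$ of $v_j=P(m_j)$ with $|\tilde v_j-v_j|<2^{-\rho}$, and if $|\tilde v_j|>2^{-\rho+2}$, return $m':=m_j$ (otherwise continue with the next $\rho$). Then, for every integer $k\ge 1$, with probability at least $1-2^{-k(\lambda-1)}$ the procedure returns a point $m'\in\mathbf{M}$ with $P(m')\neq 0$ and $$\log\max\bigl(1,|P(m')|^{-1}\bigr)=2^k\cdot O\Bigl(n\log n+\log\max\bigl(1,(\max_{m_i\in\mathbf{m}}|P(m_i)|)^{-1}\bigr)\Bigr),$$ where the implied constant depends only on the implied constant in $\lambda=O(\log n)$ (logarithms are to base 2).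
   Context: The returned point is called a pseudo-admissible point. The point of the statement is a bound on $-\log|P(m')|$ (equivalently on the working precision $\rho$ at termination) that holds with high probability over the random choices of the procedure. *)

(* Defs.v *)
From HB Require Import structures.
From mathcomp Require Import all_boot all_order all_algebra.
From mathcomp Require Import all_classical all_reals.
From mathcomp Require Import ereal sequences exp.
Set Implicit Arguments. Unset Strict Implicit. Unset Printing Implicit Defensive.
Import Order.TTheory GRing.Theory Num.Theory.
Local Open Scope ring_scope.

Definition log2 {R : realType} (x : R) : R := ln x / ln 2.

(* The grid m[eps; N] = { m + i eps : i = -ceil(N/2), ..., ceil(N/2) },
   indexed by i' : 'I_(2*ceil(N/2)+1), with i = i' - ceil(N/2).
   Note uphalf N = ceil(N/2). *)
Definition grid {R : realType} (m eps : R) (N : nat)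
  (i : 'I_(2 * uphalf N).+1) : R :=
  m + ((i : nat)%:R - (uphalf N)%:R) * eps.

(* precision in iteration j (j = 0, 1, ...): 63, 127, 255, ...
   i.e. rho_0 = 63 and rho_{j+1} = 2 rho_j + 1. *)
Definition rho (j : nat) : nat := (2 ^ (j + 6)).-1.

(* acceptance test in iteration j at point x, using approximation oracle
   approx (approx r x approximates P(x) to absolute error < 2^-r) *)
Definition accepts {R : realType} (approx : nat -> R -> R) (j : nat) (x : R)
  : bool :=
  2 ^+ 2 / 2 ^+ rho j < `|approx (rho j) x|.

(* Outcome of the first j+1 random choices s (indices into the grid pt of
   size L): the procedure stops exactly at iteration j (rejects in all
   earlier iterations, accepts at iteration j) and the returned point
   satisfies good. *)
Definition stops_good {R : realType} (approx : nat -> R -> R)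
  (good : R -> bool) (L : nat) (pt : 'I_L -> R) (j : nat)
  (s : {ffun 'I_j.+1 -> 'I_L}) : bool :=
  [&& accepts approx j (pt (s ord_max)), good (pt (s ord_max)) &
      [forall i : 'I_j.+1, ((i : nat) < j)%N ==> ~~ accepts approx i (pt (s i))]].

(* Probability (choices uniform and independent over the L grid points) that
   the procedure returns a point satisfying good: the (extended-real) sum over
   j of the probabilities of the disjoint cylinder events "stops at iteration j
   with a good point". *)
Definition success_prob {R : realType} (approx : nat -> R -> R)
  (good : R -> bool) (L : nat) (pt : 'I_L -> R) : \bar R :=
  (\sum_(0 <= j <oo)
     ((#|[set s : {ffun 'I_j.+1 -> 'I_L} | stops_good approx good pt s]|)%:R
       / (L ^ j.+1)%:R : R)%:E)%E.

Arguments grid {R} m eps N i.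
Arguments success_prob {R} approx good L pt.

(* Main.v *)
Require Import Defs.
From HB Require Import structures.
From mathcomp Require Import all_boot all_order all_algebra.
From mathcomp Require Import all_classical all_reals.
From mathcomp Require Import ereal sequences exp.
From mathcomp Require Import ring lra zify.
Import Order.TTheory GRing.Theory Num.Theory.
Local Open Scope ring_scope.
Section Log2.
Variable R : realType.
Implicit Types x y : R.

Lemma ln2_gt0 : 0 < ln (2 : R).
Proof. by rewrite ln_gt0 // ltr1n. Qed.

Lemma log2_2 : log2 (2 : R) = 1.
Proof. by rewrite /log2 divff // gt_eqF // ln2_gt0. Qed.

Lemma log2_1 : log2 (1 : R) = 0.
Proof. by rewrite /log2 ln1 mul0r. Qed.

Lemma log2M x y : 0 < x -> 0 < y -> log2 (x * y) = log2 x + log2 y.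
Proof. by move=> hx hy; rewrite /log2 lnM ?posrE // mulrDl. Qed.

Lemma log2X x k : 0 < x -> log2 (x ^+ k) = k%:R * log2 x.
Proof. by move=> hx; rewrite /log2 lnXn // mulrA mulr_natl. Qed.

Lemma log2_2X k : log2 ((2 : R) ^+ k) = k%:R.
Proof. by rewrite log2X // log2_2 mulr1. Qed.

Lemma ler_log2 x y : 0 < x -> x <= y -> log2 x <= log2 y.
Proof.
move=> hx hxy; have hy : 0 < y by apply: lt_le_trans hxy.
rewrite /log2 ler_pM2r ?invr_gt0 ?ln2_gt0 //.
by rewrite ler_ln ?posrE.
Qed.

Lemma log2_ge0 x : 1 <= x -> 0 <= log2 x.
Proof. by move=> h; rewrite -(log2_1) ler_log2. Qed.

Lemma ltr_log2 x y : 0 < x -> x < y -> log2 x < log2 y.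
Proof.
move=> hx hxy; have hy : 0 < y by apply: lt_trans hxy.
rewrite /log2 ltr_pM2r ?invr_gt0 ?ln2_gt0 //.
by rewrite ltr_ln ?posrE.
Qed.
End Log2.

Section Util.
Variable R : realType.

Lemma acc_bound (a p : R) (r : nat) : `|a - p| < 1 / 2 ^+ r ->
  2 ^+ 2 / 2 ^+ r < `|a| -> 1 / 2 ^+ r < `|p|.
Proof.
move=> h1 h2.
have e : (2 ^+ 2 / 2 ^+ r : R) = 4 * (1 / 2 ^+ r) by rewrite mulrA mulr1 -natrX.
have t : `|a| <= `|a - p| + `|p| by rewrite -[X in `|X|](subrK p) ler_normD.
have t0 : (0 : R) < 1 / 2 ^+ r by rewrite divr_gt0 // exprn_gt0.
rewrite e in h2; lra.
Qed.

Lemma rej_bound (a p : R) (r : nat) : `|a - p| < 1 / 2 ^+ r ->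
  ~~ (2 ^+ 2 / 2 ^+ r < `|a|) -> `|p| < 2 ^+ 3 / 2 ^+ r.
Proof.
move=> h1; rewrite -leNgt => h2.
have e : (2 ^+ 2 / 2 ^+ r : R) = 4 * (1 / 2 ^+ r) by rewrite mulrA mulr1 -natrX.
have e3 : (2 ^+ 3 / 2 ^+ r : R) = 8 * (1 / 2 ^+ r) by rewrite mulrA mulr1 -natrX.
have t : `|p| <= `|p - a| + `|a| by rewrite -[X in `|X|](subrK a) ler_normD.
rewrite distrC in t.
have t0 : (0 : R) < 1 / 2 ^+ r by rewrite divr_gt0 // exprn_gt0.
rewrite e in h2; rewrite e3; lra.
Qed.

Lemma good_of (p : R) (r : nat) : 1 / 2 ^+ r < `|p| ->
  p != 0 /\ log2 (Num.max 1 `|p|^-1) <= r%:R.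
Proof.
move=> h.
have t0 : (0 : R) < 1 / 2 ^+ r by rewrite divr_gt0 // exprn_gt0.
have pp : 0 < `|p| by apply: lt_trans h.
split; first by rewrite -normr_gt0.
rewrite -(log2_2X R r); apply: ler_log2.
  by apply: (@lt_le_trans _ _ 1); rewrite ?le_max ?lexx.
rewrite ge_max; apply/andP; split.
  by rewrite exprn_ege1 // ler1n.
have := h; rewrite -ltf_pV2 ?posrE // => /ltW.
by rewrite invf_div divr1.
Qed.

Lemma nat_dist1 (a b : nat) : a != b -> 1 <= `|a%:R - b%:R : R|.
Proof.
case: (ltngtP a b) => // h _.
  by rewrite distrC -natrB ?normr_nat ?ler1n ?subn_gt0 // ltnW.
by rewrite -natrB ?normr_nat ?ler1n ?subn_gt0 // ltnW.
Qed.

Lemma nat_half (i u : nat) : (i <= 2 * u)%N -> `|i%:R - u%:R : R| <= u%:R.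
Proof.
move=> h; have h' : (i%:R : R) <= 2 * u%:R by rewrite -natrM ler_nat.
have h0 : (0 : R) <= i%:R by [].
rewrite ler_norml; apply/andP; split; lra.
Qed.

Lemma prod_bound (r : nat -> R) j0 k a : (forall i, 0 <= r i <= 1) ->
  (forall i, (j0 <= i)%N -> r i <= a) -> \prod_(i < j0 + k) r i <= a ^+ k.
Proof.
move=> h01 ha.
rewrite -(big_mkord (fun=> true)) (@big_cat_nat _ _ _ j0 0 (j0 + k) _ _ (leq0n j0) (leq_addr k j0)) /=.
have -> : a ^+ k = \prod_(j0 <= i < j0 + k) a by rewrite prodr_const_nat addKn.
have r0 : forall i, 0 <= r i by move=> i; case/andP: (h01 i).
rewrite -[X in _ <= X]mul1r; apply: ler_pM.
- by apply: prodr_ge0.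
- by apply: prodr_ge0.
- by apply: prodr_ile1.
rewrite big_nat_cond [X in _ <= X]big_nat_cond.
apply: ler_prod => i /andP[/andP[hi _] _]; rewrite r0; exact: ha.
Qed.

Lemma grid_dist (n lam : nat) (m eps : R) (i a b : nat) : 0 < eps ->
  (i <= 2 * uphalf n)%N -> (b <= 2 * uphalf (2 ^ lam * n))%N -> a != b ->
  `|(m + (i%:R - (uphalf n)%:R) * eps) -
     (m + (b%:R - (uphalf (2 ^ lam * n))%:R) * (eps / 2 ^+ lam))|
  <= 2 ^+ lam.+1 * n%:R *
     `|(m + (a%:R - (uphalf (2 ^ lam * n))%:R) * (eps / 2 ^+ lam)) -
       (m + (b%:R - (uphalf (2 ^ lam * n))%:R) * (eps / 2 ^+ lam))|.
Proof.
move=> e0 hi hb hab.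
set u := uphalf n; set U := uphalf (2 ^ lam * n).
set e2 : R := 2 ^+ lam; set h := eps / e2.
have e20 : 0 < e2 by rewrite exprn_gt0.
have h0 : 0 < h by rewrite divr_gt0.
have epsE : eps = e2 * h by rewrite /h mulrC divfK // gt_eqF.
have -> : m + (i%:R - u%:R) * eps - (m + (b%:R - U%:R) * h) =
          ((i%:R - u%:R) * e2 - (b%:R - U%:R)) * h.
  rewrite epsE; ring.
have -> : m + (a%:R - U%:R) * h - (m + (b%:R - U%:R) * h) = (a%:R - b%:R) * h.
  ring.
rewrite !(normrM _ h) (gtr0_norm h0).
have d1 : 1 <= `|a%:R - b%:R : R| := nat_dist1 _ _ hab.
have hu : (u <= n)%N by rewrite /u; lia.
have hU : (U <= 2 ^ lam * n)%N by rewrite /U; lia.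
have A : `|i%:R - u%:R : R| <= u%:R := nat_half _ _ hi.
have Bb : `|b%:R - U%:R : R| <= U%:R := nat_half _ _ hb.
have hun : (u%:R : R) <= n%:R by rewrite ler_nat.
have hUn : (U%:R : R) <= e2 * n%:R by rewrite /e2 -natrX -natrM ler_nat.
have key : `|(i%:R - u%:R) * e2 - (b%:R - U%:R)| <= 2 * e2 * n%:R.
  apply: (le_trans (ler_normB _ _)).
  rewrite normrM (gtr0_norm e20).
  have : `|i%:R - u%:R : R| * e2 <= n%:R * e2.
    by rewrite ler_pM2r //; apply: le_trans A hun.
  lra.
rewrite exprS -/e2.
have n0 : (0 : R) <= n%:R by [].
apply: (le_trans (ler_wpM2r (ltW h0) key)).
apply: ler_wpM2l.
  by rewrite !mulr_ge0 // ltW.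
by rewrite ler_peMl // ltW.
Qed.
End Util.

Section Interp.
Variable R : realType.

Lemma interp_bound (P : {poly R}) (n : nat) (x : nat -> R) (y B d : R) :
  injective x -> (size P <= n.+1)%N -> 0 <= B ->
  (forall i, (i <= n)%N -> `|P.[x i]| <= d) ->
  (forall i j, (i <= n)%N -> (j <= n)%N -> i != j ->
      `|y - x j| <= B * `|x i - x j|) ->
  `|P.[y]| <= n.+1%:R * d * B ^+ n.
Proof.
move=> xinj sP B0 hd hB.
rewrite (lagrange_gen (ltn0Sn n) xinj sP) horner_sum.
apply: (le_trans (ler_norm_sum _ _ _)).
have -> : n.+1%:R * d * B ^+ n = \sum_(i < n.+1) (d * B ^+ n).
  by rewrite sumr_const card_ord -mulrA mulr_natl.
apply: ler_sum => i _.
rewrite (lagrangeE (ltn0Sn n) xinj).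
set p := \prod_(j < n.+1 | j != i) ('X - (x j)%:P).
rewrite hornerM hornerC hornerM hornerC.
have px : p.[x i] != 0.
  rewrite /p horner_prod; apply/prodf_neq0 => j ji.
  by rewrite hornerXsubC subr_eq0 inj_eq // eq_sym.
have py : `|p.[y]| <= B ^+ n * `|p.[x i]|.
  rewrite /p !horner_prod !normr_prod.
  have -> : B ^+ n = \prod_(j < n.+1 | j != i) B.
    by rewrite prodr_const cardC1 card_ord.
  rewrite -big_split /=; apply: ler_prod => j ji.
  rewrite !hornerXsubC normr_ge0 /=.
  apply: hB; [exact: ltn_ord i | exact: ltn_ord j | by rewrite eq_sym].
rewrite normrM normrM normrV ?unitfE //.
have hd0 : 0 <= d by apply: le_trans (hd 0%N isT); exact: normr_ge0.
apply: ler_pM; rewrite ?normr_ge0 //.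
  by apply: hd; exact: ltn_ord i.
rewrite mulrC -/p ler_pdivrMr ?normr_gt0 //.
Qed.
End Interp.

Section Count.
Variable R : realType.

Lemma card_stops (approx : nat -> R -> R) (good : R -> bool) (L : nat)
  (pt : 'I_L -> R) (j : nat) :
  #|[set s : {ffun 'I_j.+1 -> 'I_L} | stops_good approx good pt s]| =
  (#|[set x | accepts approx j (pt x) && good (pt x)]| *
   \prod_(i < j) #|[set x | ~~ accepts approx i (pt x)]|)%N.
Proof.
pose F (i : 'I_j.+1) : pred 'I_L :=
  if i == ord_max then [pred x | accepts approx j (pt x) && good (pt x)]
  else [pred x | ~~ accepts approx i (pt x)].
have -> : [set s : {ffun 'I_j.+1 -> 'I_L} | stops_good approx good pt s]
          = [set s | s \in family F].
  apply/setP => s; rewrite !inE /stops_good.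
  apply/idP/familyP.
    case/and3P=> ha hg /forallP hf i; rewrite /F.
    case: eqP => [->|ne]; first by rewrite inE ha hg.
    rewrite inE; apply: (implyP (hf i)).
    by rewrite ltn_neqAle -ltnS ltn_ord andbT; apply/eqP => e; apply: ne; apply: val_inj.
  move=> hF; have := hF ord_max; rewrite /F eqxx inE => /andP[-> ->] /=.
  apply/forallP => i; apply/implyP => lt; have := hF i; rewrite /F.
  by rewrite -val_eqE /= (ltn_eqF lt) inE.
rewrite cardsE card_family foldrE big_map big_enum /=.
rewrite big_ord_recr /= mulnC /F eqxx; congr (_ * _)%N.
  by apply: eq_card => x; rewrite inE.
apply: eq_bigr => i _; rewrite -val_eqE /= (ltn_eqF (ltn_ord i)).
by apply: eq_card => x; rewrite inE.
Qed.

Lemma telesc (r : nat -> R) J :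
  \sum_(j < J) ((1 - r j) * \prod_(i < j) r i) = 1 - \prod_(i < J) r i.
Proof.
elim: J => [|J IH]; first by rewrite big_ord0 big_ord0 subrr.
rewrite big_ord_recr /= IH big_ord_recr /=.
by rewrite mulrBl mul1r addrA subrK mulrC.
Qed.

Definition rej (approx : nat -> R -> R) (L : nat) (pt : 'I_L -> R) (i : nat) : R :=
  #|[set x | ~~ accepts approx i (pt x)]|%:R / L%:R.
Arguments rej approx {L} pt i.

Lemma term_eq (approx : nat -> R -> R) (good : R -> bool) (L : nat)
  (pt : 'I_L -> R) (j : nat) : (0 < L)%N ->
  (forall x, accepts approx j (pt x) -> good (pt x)) ->
  ((#|[set s : {ffun 'I_j.+1 -> 'I_L} | stops_good approx good pt s]|)%:R
       / (L ^ j.+1)%:R : R) =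
  (1 - rej approx pt j) * \prod_(i < j) rej approx pt i.
Proof.
move=> L0 hg.
rewrite card_stops natrM natr_prod /rej prodf_div prodr_const card_ord.
have hc : #|[set x | accepts approx j (pt x) && good (pt x)]| =
          (L - #|[set x | ~~ accepts approx j (pt x)]|)%N.
  have -> : [set x | ~~ accepts approx j (pt x)] =
            ~: [set x | accepts approx j (pt x) && good (pt x)].
    apply/setP => x; rewrite !inE.
    by case h: (accepts _ _ _) => //=; rewrite hg.
  by rewrite cardsCs card_ord.
have hle : (#|[set x | ~~ accepts approx j (pt x)]| <= L)%N.
  by rewrite -[X in (_ <= X)%N]card_ord max_card.
have LR : (L%:R : R) != 0 by rewrite pnatr_eq0 -lt0n.
rewrite hc natrB // natrX exprSr.
field.
by rewrite LR expf_neq0.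
Qed.
End Count.

Section Grid.
Variable R : realType.

Lemma grid_inj (m eps : R) N : 0 < eps -> injective (grid m eps N).
Proof.
move=> e0 i j; rewrite /grid => /addrI /mulIf.
move=> /(_ (lt0r_neq0 e0)) /subIr /eqP; rewrite eqr_nat => /eqP e.
exact: val_inj.
Qed.

Lemma maxm_pos (P : {poly R}) n (m eps : R) : 0 < eps -> size P = n.+1 ->
  0 < \big[Num.max/0]_(i : 'I_(2 * uphalf n).+1) `|P.[grid m eps n i]|.
Proof.
move=> e0 sP.
have ge0 : 0 <= \big[Num.max/0]_(i : 'I_(2 * uphalf n).+1) `|P.[grid m eps n i]|.
  exact: le_trans (normr_ge0 P.[grid m eps n ord0]) (le_bigmax _ _ _).
rewrite lt_neqAle ge0 andbT; apply/negP => /eqP e0'.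
have P0 : P = 0.
  apply: (@roots_geq_poly_eq0 _ P [seq grid m eps n i | i <- enum 'I_(2 * uphalf n).+1]).
  - apply/allP => y /mapP [i _ ->]; rewrite /root.
    apply/normr0P; apply/eqP; rewrite eq_le normr_ge0 andbT e0'.
    exact: le_bigmax.
  - by rewrite (map_inj_uniq (@grid_inj m eps n e0)) enum_uniq.
  - by rewrite size_map size_enum_ord sP; lia.
by move: sP; rewrite P0 size_poly0.
Qed.

Lemma few_small (P : {poly R}) n lam (m eps d : R) : 0 < eps -> size P = n.+1 ->
  n.+1%:R * d * (2 ^+ lam.+1 * n%:R) ^+ n <
    \big[Num.max/0]_(i : 'I_(2 * uphalf n).+1) `|P.[grid m eps n i]| ->
  (#|[set x : 'I_(2 * uphalf (2 ^ lam * n)).+1 |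
       (`|P.[grid m (eps / 2 ^+ lam) (2 ^ lam * n) x]| < d)%R]| <= n)%N.
Proof.
move=> e0 sP hlt; rewrite leqNgt; apply/negP.
set U := uphalf (2 ^ lam * n).
set S := (X in #|X|) => hS.
set s := enum S.
have ss : (n < size s)%N by rewrite /s -cardE.
pose g j := if (j <= n)%N then val (nth ord0 s j) else ((2 * U).+1 + j)%N.
have ginj : injective g.
  move=> a b; rewrite /g.
  case: (leqP a n) => ha; case: (leqP b n) => hb.
  - move=> /val_inj /eqP; rewrite nth_uniq ?enum_uniq //; first by move/eqP.
      by apply: leq_ltn_trans ss.
    by apply: leq_ltn_trans ss.
  - by move=> e; have := ltn_ord (nth ord0 s a); rewrite e; lia.
  - by move=> e; have := ltn_ord (nth ord0 s b); rewrite -e; lia.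
  - lia.
have h0 : 0 < eps / 2 ^+ lam by rewrite divr_gt0 // exprn_gt0.
pose X j := m + ((g j)%:R - U%:R) * (eps / 2 ^+ lam).
have Xinj : injective X.
  move=> a b; rewrite /X => /addrI /(mulIf (lt0r_neq0 h0)) /subIr /eqP.
  by rewrite eqr_nat => /eqP /ginj.
have hd : forall j, (j <= n)%N -> `|P.[X j]| <= d.
  move=> j hj; have : nth ord0 s j \in S.
    by rewrite -mem_enum mem_nth // (leq_ltn_trans hj ss).
  by rewrite inE /X /g hj => /ltW.
have d0 : 0 <= d by apply: le_trans (hd 0%N isT); exact: normr_ge0.
have B0 : (0 : R) <= 2 ^+ lam.+1 * n%:R by rewrite mulr_ge0 // exprn_ge0.
have : \big[Num.max/0]_(i : 'I_(2 * uphalf n).+1) `|P.[grid m eps n i]|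
        <= n.+1%:R * d * (2 ^+ lam.+1 * n%:R) ^+ n.
  apply: bigmax_le; first by rewrite !mulr_ge0 // exprn_ge0.
  move=> i _; apply: (@interp_bound R P n X) => //; first by rewrite sP.
  move=> a b ha hb hab; rewrite /grid /X.
  apply: grid_dist => //; first by rewrite -ltnS ltn_ord.
    by rewrite /g hb -ltnS ltn_ord.
  by rewrite (inj_eq ginj).
by rewrite leNgt hlt.
Qed.
End Grid.

Section Arith.
Variable R : realType.

Lemma rhoJ_bound (c : R) (n lam k' j0 : nat) (Mx : R) :
  0 < c -> (2 <= n)%N -> lam%:R <= c * log2 (n%:R : R) -> 1 <= Mx ->
  (j0 = 0%N \/ exists j, j0 = j.+1 /\
     (2 : R) ^+ rho j <= 8 * n.+1%:R * (2 ^+ lam.+1 * n%:R) ^+ n * Mx) ->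
  (rho (j0 + k'))%:R <= 2 ^+ k'.+1 * (c + 16) *
     ((n%:R : R) * log2 (n%:R : R) + log2 Mx).
Proof.
move=> c0 hn hlam hM hj0.
set l := log2 (n%:R : R); set lM := log2 Mx.
have n2 : (2 : R) <= n%:R by rewrite ler_nat.
have l1 : 1 <= l.
  by rewrite -(log2_2 R); apply: ler_log2.
have lM0 : 0 <= lM by apply: log2_ge0.
set N := n%:R * l.
have hNl : l <= N by rewrite /N ler_peMl //; lra.
have hNn : n%:R <= N by rewrite /N ler_peMr //; lra.
have hN2 : 2 <= N by lra.
have cl0 : 0 <= c * lM by rewrite mulr_ge0 // ltW.
have e1 : (rho (j0 + k'))%:R <= (2 : R) ^+ k'.+1 * 2 ^+ (j0 + 5).
  rewrite -exprD -natrX ler_nat /rho.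
  have -> : (k'.+1 + (j0 + 5) = j0 + k' + 6)%N by lia.
  by rewrite leq_pred.
suff e2 : (2 : R) ^+ (j0 + 5) <= (c + 16) * (N + lM).
  apply: (le_trans e1); rewrite -mulrA ler_wpM2l // exprn_ge0 //.
case: hj0 => [-> | [j [-> hT]]].
  rewrite add0n.
  have -> : (2 : R) ^+ 5 = 32 by rewrite -natrX.
  have : 0 <= c * N by rewrite mulr_ge0 // ?ltW //; lra.
  lra.
have pB : (0 : R) < 2 ^+ lam.+1 * n%:R by rewrite mulr_gt0 ?exprn_gt0 //; lra.
have hT' : (rho j)%:R <= log2 (8 * n.+1%:R * (2 ^+ lam.+1 * n%:R) ^+ n * Mx : R).
  rewrite -(log2_2X R (rho j)); apply: ler_log2 => //.
have eT : log2 (8 * n.+1%:R * (2 ^+ lam.+1 * n%:R) ^+ n * Mx : R) =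
    3 + log2 (n.+1%:R : R) + n%:R * ((lam.+1)%:R + l) + lM.
  have -> : (8 : R) = 2 ^+ 3 by rewrite -natrX.
  rewrite log2M ?mulr_gt0 ?exprn_gt0 ?ltr0Sn //; last lra.
  rewrite (@log2M R (2 ^+ 3 * n.+1%:R)); last by rewrite exprn_gt0 // mulr_gt0.
    2: by rewrite mulr_gt0 ?exprn_gt0.
  rewrite (@log2M R (2 ^+ 3)) ?exprn_gt0 //.
  rewrite (log2_2X R 3) (@log2X R _ n); last by rewrite mulr_gt0 ?exprn_gt0 //; lra.
  rewrite (@log2M R (2 ^+ lam.+1)) ?exprn_gt0 //; last lra.
  by rewrite (log2_2X R lam.+1) -/l -/lM.
have hn1 : log2 (n.+1%:R : R) <= 1 + l.
  have e : log2 (2 * n%:R : R) = 1 + l.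
    by rewrite (@log2M R 2) ?(log2_2 R) //; lra.
  rewrite -e; apply: ler_log2 => //.
  have -> : (n.+1%:R : R) = n%:R + 1 by rewrite natr1.
  lra.
have hl : (lam.+1%:R : R) <= c * l + 1.
  have -> : (lam.+1%:R : R) = lam%:R + 1 by rewrite natr1.
  move: hlam; rewrite -/l; lra.
have hnl : n%:R * ((lam.+1)%:R + l) <= c * N + n%:R + N.
  have : n%:R * ((lam.+1)%:R + l) <= n%:R * (c * l + 1 + l).
    by rewrite ler_wpM2l //; lra.
  have -> : n%:R * (c * l + 1 + l) = c * N + n%:R + N by rewrite /N; ring.
  done.
have hj : (2 : R) ^+ (j.+1 + 5) = (rho j)%:R + 1.
  have hj' : (2 ^ (j.+1 + 5))%N = (rho j).+1.
    by rewrite /rho addSn -addnS prednK // expn_gt0.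
  by rewrite -natrX hj' -natr1.
rewrite hj.
have : 0 <= c * N by rewrite mulr_ge0 // ?ltW //; lra.
rewrite eT in hT'.
lra.
Qed.
End Arith.



Lemma nat_L (lam n : nat) : (2 ^ lam * n <= (2 * uphalf (2 ^ lam * n)).+1)%N.
Proof. set N := (2 ^ lam * n)%N; lia. Qed.

Lemma rho_mono (j j' : nat) : (j <= j')%N -> (rho j <= rho j')%N.
Proof.
move=> h; rewrite /rho -!subn1 leq_sub2r // leq_pexp2l // leq_add2r //.
Qed.

Lemma rho_ge (j : nat) : (j <= rho j)%N.
Proof.
rewrite /rho; have := ltn_expl (j + 6) (ltnSn 1); set e := (2 ^ (j + 6))%N; lia.
Qed.

Theorem lemma1 (R : realType) (c : R) (hc : 0 < c) :
  exists C : R, 0 < C /\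
  forall (n : nat) (P : {poly R}) (m eps : R) (lambda k : nat)
         (approx : nat -> R -> R),
    (2 <= n)%N -> size P = n.+1 ->
    0 < eps ->
    (2 <= lambda)%N -> lambda%:R <= c * log2 (n%:R : R) ->
    (forall (r : nat) (x : R), `|approx r x - P.[x]| < 1 / 2 ^+ r) ->
    (1 <= k)%N ->
    let maxm : R := \big[Num.max/0]_(i : 'I_(2 * uphalf n).+1)
                  `|P.[grid m eps n i]| in
    let bound := 2 ^+ k * C *
          ((n%:R : R) * log2 (n%:R : R) + log2 (Num.max 1 maxm^-1)) in
    let good := fun x : R =>
          (P.[x] != 0) && (log2 (Num.max 1 `|P.[x]|^-1) <= bound) in
    ((1 - 1 / 2 ^+ (k * (lambda - 1))) %:E <=
      success_prob approx good _
        (grid m (eps / 2 ^+ lambda) (2 ^ lambda * n)))%E.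
Proof.
exists (c + 16); split; first by lra.

intros n P m eps lam k approx hn sP e0 hlam2 hlc happ hk.
cbv zeta.
set maxm := (\big[_/_]_(i < _) _).
set good := (fun x : R => _).
have mpos : 0 < maxm := @maxm_pos R P n m eps e0 sP.
set Mx := Num.max 1 maxm^-1.
have Mx1 : 1 <= Mx by rewrite le_max lexx.
have Mxm : 1 <= Mx * maxm.
  have : maxm^-1 <= Mx by rewrite le_max lexx orbT.
  move=> h; have := ler_wpM2r (ltW mpos) h; rewrite mulVf //; exact: lt0r_neq0.
set B : R := 2 ^+ lam.+1 * n%:R.
set T : R := 8 * n.+1%:R * B ^+ n * Mx.
set pt := grid m (eps / 2 ^+ lam) (2 ^ lam * n).
have L0 : (0 < (2 * uphalf (2 ^ lam * n)).+1)%N by [].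
have few : forall j, T < 2 ^+ rho j ->
    (#|[set x | ~~ accepts approx j (pt x)]| <= n)%N.
  move=> j hj.
  have q0 : (0 : R) < 2 ^+ rho j by rewrite exprn_gt0.
  apply: leq_trans (@few_small R P n lam m eps (2 ^+ 3 / 2 ^+ rho j) e0 sP _).
    apply: subset_leq_card; apply/fintype.subsetP => x; rewrite !inE => hx.
    exact: rej_bound (happ _ _) hx.
  have -> : n.+1%:R * (2 ^+ 3 / 2 ^+ rho j) * B ^+ n =
            (8 * n.+1%:R * B ^+ n) / 2 ^+ rho j.
    rewrite -natrX /=; field; exact: lt0r_neq0.
  rewrite ltr_pdivrMr //.
  have K0 : 0 <= 8 * n.+1%:R * B ^+ n by rewrite !mulr_ge0 // exprn_ge0 // /B mulr_ge0 // exprn_ge0.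
  apply: (le_lt_trans (ler_peMr K0 Mxm)).
  rewrite mulrA -/T mulrC ltr_pM2l //.
set L := (2 * uphalf (2 ^ lam * n)).+1.
have LR : (2 ^+ lam * n%:R : R) <= L%:R by rewrite -natrX -natrM ler_nat nat_L.
have e2 : (0 : R) < 2 ^+ lam by rewrite exprn_gt0.
have rle : forall j, T < 2 ^+ rho j -> rej R approx _ pt j <= (2 ^+ lam)^-1.
  move=> j hj; rewrite /rej ler_pdivrMr ?ltr0n //.
  apply: le_trans (_ : n%:R <= _).
    by rewrite ler_nat; exact: few.
  rewrite -(ler_pM2l e2) mulrA mulfV ?mul1r //; exact: lt0r_neq0.
have r01 : forall j, 0 <= rej R approx _ pt j <= 1.
  move=> j; rewrite /rej divr_ge0 //= ler_pdivrMr ?ltr0n // mul1r ler_nat.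
  by rewrite -[X in (_ <= X)%N]card_ord max_card.
have mono : forall j j', (j <= j')%N -> T < 2 ^+ rho j -> T < 2 ^+ rho j'.
  move=> j j' hjj' hj; apply: lt_le_trans hj _.
  by rewrite ler_eXn2l ?ltr1n // rho_mono.
have exT : exists j, T < 2 ^+ rho j.
  have T0 : 0 <= T by rewrite !mulr_ge0 // ?exprn_ge0 // ?/B ?mulr_ge0 ?exprn_ge0 //; lra.
  exists (Num.Def.archi_bound T).
  apply: lt_le_trans (archi_boundP T0) _.
  rewrite -natrX ler_nat; apply: leq_trans (rho_ge _) _.
  by apply: ltnW; apply: ltn_expl.
case: (ex_minnP exT) => j0 hj0 hmin.
have [k' ek] : exists k', k = k'.+1 by exists k.-1; rewrite prednK.
set J := (j0 + k')%N.
have hJ : (rho J)%:R <= 2 ^+ k * (c + 16) * (n%:R * log2 n%:R + log2 Mx).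
  rewrite ek; apply: (@rhoJ_bound R c n lam k' j0 Mx) => //.
  case: j0 hj0 hmin {J} => [|j] hj0 hmin; first by left.
  right; exists j; split => //; rewrite leNgt; apply/negP => /hmin.
  by rewrite ltnn.
have racc : forall j x, (j <= J)%N -> accepts approx j (pt x) -> good (pt x).
  move=> j x hjJ ha.
  have hp := @acc_bound R _ _ _ (happ _ _) ha.
  case: (@good_of R _ _ hp) => hp0 hlog.
  rewrite /good hp0 /=; apply: le_trans hlog _; apply: le_trans _ hJ.
  by rewrite ler_nat rho_mono.
rewrite /success_prob.
apply: le_trans (nneseries_lim_ge J.+1 _); last first.
  by move=> i _ _; rewrite lee_fin divr_ge0.
rewrite sumEFin lee_fin big_mkord.
rewrite (eq_bigr (fun j : 'I_J.+1 => (1 - rej R approx _ pt j) *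
                   \prod_(i < j) rej R approx _ pt i)); last first.
  move=> j _; apply: term_eq => // x; apply: racc.
  by rewrite -ltnS ltn_ord.
rewrite telesc lerD2l lerN2.
have hp := @prod_bound R (rej R approx _ pt) j0 k (2 ^+ lam)^-1 r01
   (fun i hi => rle i (mono j0 i hi hj0)).
rewrite /J -addnS -ek.
apply: le_trans hp _.
rewrite exprVn div1r lef_pV2 ?posrE ?exprn_gt0 // -exprM ler_eXn2l ?ltr1n //.
by rewrite mulnC leq_mul2r leq_subr orbT.
Qed.
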